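(* For every $n\geq 1$: $\widehat{\left(\Sigma_n^0\text{-}\mathrm{LLPO}\right)}\leq_W\mathrm{Det}_{\mathfrak{D}_n}$ and $\left(\Sigma_n^0\text{-}\mathrm{LEM}\right)\leq_W\mathrm{Win}_{\mathfrak{D}_n}$.
   Context: $f\leq_W g$ (Weihrauch reducibility between partial multivalued maps on represented spaces) iff there are computable partial $K,H:\subseteq\mathbb{N}^\mathbb{N}\to\mathbb{N}^\mathbb{N}$ such that for every realizer $G$ of $g$, $p\mapsto K(\langle p,G(H(p))\rangle)$ is a realizer of $f$. $\widehat{f}(x_0,x_1,\ldots)=(f(x_0),f(x_1),\ldots)$. For $p\in\{0,1\}^\mathbb{N}$ let $\varphi_n(p)$ be the statement $\forall k_1\exists k_2\ldots\natural k_n\ p(\langle k_1,\ldots,k_n\rangle)=1$ (alternating quantifiers starting with $\forall$; $\natural=\forall$ if $n$ odd, $\exists$ if $n$ even; $\langle\cdot\rangle$ a computable tupling). $\Sigma^0_n\text{-}\mathrm{LEM}:\{0,1\}^\mathbb{N}\to\{0,1\}$ outputs $1$ iff $\varphi_n(p)$ holds. $\Sigma^0_n\text{-}\mathrm{LLPO}$ takes a pair $(p_0,p_1)$ for which $\varphi_n(p_0)$ or $\varphi_n(p_1)$ holds, and outputs any $i\in\{0,1\}$ with $\varphi_n(p_i)$. $\mathfrak{D}_n$ ($n$-th level of the difference hierarchy) consists of the sets $D\subseteq\{0,1\}^\mathbb{N}$ for which there are open $U_0,\ldots,U_{n-1}$ with $x\in D\iff \min\{\beta\mid x\in U_\beta\}\not\equiv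 n \pmod 2$ (where $\min\emptyset=n$); such $D$ is named by names of $U_0,\ldots,U_{n-1}$ (an open set being named by an enumeration of words $w$ with $U=\bigcup w\{0,1\}^\mathbb{N}$). Games: win/lose games with players 1,2, choices $\{0,1\}$, turn function $d:\{0,1\}^*\to\{1,2\}$ (lookup table), winning set for player 1, the rest won by player 2; a strategy is winning if all plays consistent with it are won. $\mathrm{Det}_\Gamma$: input such a game with player-1 winning set given by a $\Gamma$-name; output any strategy profile (function $\{0,1\}^*\to\{0,1\}$) in which one strategy is winning. $\mathrm{Win}_\Gamma$: same input, output the player having a winning strategy. *)

(* Defs.v *)
From mathcomp Require Import all_boot.
Set Implicit Arguments. Unset Strict Implicit. Unset Printing Implicit Defensive.

Inductive prf : Type :=
| PZero : prf
| PSucc : prf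
| PProj : nat -> prf
| PComp : prf -> list prf -> prf
| PPrec : prf -> prf -> prf
| PMu   : prf -> prf.

Inductive eval : prf -> seq nat -> nat -> Prop :=
| eZero args : eval PZero args 0
| eSucc args : eval PSucc args (head 0 args).+1
| eProj i args : eval (PProj i) args (nth 0 args i)
| eComp f gs args ys y :
    evals gs args ys -> eval f ys y -> eval (PComp f gs) args y
| ePrec0 f g args y : eval f args y -> eval (PPrec f g) (0 :: args) y
| ePrecS f g n args r y :
    eval (PPrec f g) (n :: args) r -> eval g (n :: r :: args) y ->
    eval (PPrec f g) (n.+1 :: args) y
| eMu f args n :
    eval f (n :: args) 0 ->
    (forall m, m < n -> exists2 y, y <> 0 & eval f (m :: args) y) ->
    eval (PMu f) args n
with evals : list prf -> seq nat -> seq nat -> Prop :=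
| esNil args : evals nil args [::]
| esCons g gs args y ys :
    eval g args y -> evals gs args ys -> evals (g :: gs) args (y :: ys).

Definition pair (a b : nat) : nat := (a + b) * (a + b).+1 %/ 2 + b.

Fixpoint seqcode (s : seq nat) : nat :=
  if s is x :: s' then (pair x (seqcode s')).+1 else 0.

Definition baire := nat -> nat.

Definition prefix (p : baire) (k : nat) : seq nat := mkseq p k.

(* The n-th output symbol is q n = m iff, for the least k such that the
   partial recursive function e returns a nonzero value on (n, p|k),
   that value is m+1 (all shorter prefixes returning 0 = "not yet"). *)
Definition computes (e : prf) (p q : baire) : Prop :=
  forall n, exists k,
    eval e [:: pair n (seqcode (prefix p k))] (q n).+1 /\
    forall j, j < k -> eval e [:: pair n (seqcode (prefix p j))] 0.

Definition pairB (p q : baire) : baire :=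
  fun i => if odd i then q i./2 else p i./2.

Record rep := Rep { carrier :> Type; names : baire -> carrier -> Prop }.

Record mvf (X Y : rep) := MVF {
  mdom : carrier X -> Prop;
  mrel : carrier X -> carrier Y -> Prop }.

Definition realizer (X Y : rep) (f : mvf X Y) (F : baire -> baire) : Prop :=
  forall p x, names p x -> mdom f x ->
    exists2 y, names (F p) y & mrel f x y.

(* f <=_W g, with K, H given by machines; K and H are partial (their
   domain is where the machine produces an infinite output), and the
   composition p |-> K<p, G(H p)> must be defined and realize f
   for every realizer G of g.  *)
Definition Wred (X Y X' Y' : rep) (f : mvf X Y) (g : mvf X' Y') : Prop :=
  exists (eK eH : prf), forall G : baire -> baire, realizer g G ->
    forall p x, names p x -> mdom f x ->
      exists q, computes eH p q /\ (exists2 z, names q z & mdom g z) /\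
      exists r, computes eK (pairB p (G q)) r /\
        exists2 y, names r y & mrel f x y.

Definition cantorR : rep :=
  @Rep (nat -> bool) (fun p x => forall i, p i = nat_of_bool (x i)).

Definition bitR : rep := @Rep bool (fun p b => p 0 = nat_of_bool b).

Definition prodR (X Y : rep) : rep :=
  @Rep (carrier X * carrier Y)
    (fun p xy => names (fun i => p i.*2) xy.1 /\ names (fun i => p i.*2.+1) xy.2).

Definition seqR (X : rep) : rep :=
  @Rep (nat -> carrier X)
    (fun p xs => forall i, names (fun j => p (pair i j)) (xs i)).

Definition hat (X Y : rep) (f : mvf X Y) : mvf (seqR X) (seqR Y) :=
  @MVF (seqR X) (seqR Y)
    (fun xs => forall i, mdom f (xs i))
    (fun xs ys => forall i, mrel f (xs i) (ys i)).

Fixpoint tuple (ks : seq nat) : nat :=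
  match ks with
  | [::] => 0
  | [:: k] => k
  | k :: ks' => pair k (tuple ks')
  end.

Fixpoint qalt (n : nat) (univ : bool) (P : seq nat -> Prop) : Prop :=
  match n with
  | 0 => P [::]
  | n'.+1 => if univ then forall k, qalt n' false (fun ks => P (k :: ks))
             else exists k, qalt n' true (fun ks => P (k :: ks))
  end.

Definition phi (n : nat) (p : nat -> bool) : Prop :=
  qalt n true (fun ks => p (tuple ks) = true).

Definition SigmaLEM (n : nat) : mvf cantorR bitR :=
  @MVF cantorR bitR (fun _ => True) (fun p b => b = true <-> phi n p).

Definition SigmaLLPO (n : nat) : mvf (prodR cantorR cantorR) bitR :=
  @MVF (prodR cantorR cantorR) bitR
    (fun pp => phi n pp.1 \/ phi n pp.2)
    (fun pp i => phi n (if i then pp.2 else pp.1)).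

Inductive player := P1 | P2.

Definition player_code (i : player) : nat := if i is P1 then 1 else 2.

Definition playerR : rep := @Rep player (fun p i => p 0 = player_code i).

Definition wcode (w : seq bool) : nat := seqcode (map nat_of_bool w).

Definition bprefix (x : nat -> bool) (k : nat) : seq bool := mkseq x k.

(* open set named by an enumeration of words: p i = (code w).+1 lists w,
   other values are ignored (allowing the empty set) *)
Definition open_of (p : baire) (x : nat -> bool) : Prop :=
  exists i w, p i = (wcode w).+1 /\ bprefix x (size w) = w.

(* x in D(U_0,...,U_{n-1}) iff min{beta | x in U_beta} (min empty = n)
   is not congruent to n mod 2 *)
Definition is_min_idx (n : nat) (U : nat -> (nat -> bool) -> Prop)
    (x : nat -> bool) (b : nat) : Prop :=
  b <= n /\ (b < n -> U b x) /\ (forall c, c < b -> ~ U c x).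

Definition diff_set (n : nat) (U : nat -> (nat -> bool) -> Prop)
    (x : nat -> bool) : Prop :=
  exists b, is_min_idx n U x b /\ odd b <> odd n.

(* a game: turn function and winning set for player 1 *)
Definition game := ((seq bool -> player) * ((nat -> bool) -> Prop))%type.

(* game with winning set given by a D_n-name:
   p = <p_d, p_W>, p_d a lookup table of d, p_W = <u_0,u_1,...> with
   u_beta (beta < n) names of the open sets U_beta *)
Definition gameR (n : nat) : rep :=
  @Rep game (fun p g =>
    (forall w, p (wcode w).*2 = player_code (g.1 w)) /\
    (forall x, g.2 x <->
       diff_set n (fun b => open_of (fun j => p (pair b j).*2.+1)) x)).

Definition profR : rep :=
  @Rep (seq bool -> bool) (fun p s => forall w, p (wcode w) = nat_of_bool (s w)).

Definition consistent (d : seq bool -> player) (s : seq bool -> bool)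
    (i : player) (x : nat -> bool) : Prop :=
  forall k, d (bprefix x k) = i -> x k = s (bprefix x k).

Definition winning (g : game) (s : seq bool -> bool) (i : player) : Prop :=
  forall x, consistent g.1 s i x ->
    (if i is P1 then g.2 x else ~ g.2 x).

Definition Det (n : nat) : mvf (gameR n) profR :=
  @MVF (gameR n) profR (fun _ => True)
    (fun g s => winning g s P1 \/ winning g s P2).

Definition Win (n : nat) : mvf (gameR n) playerR :=
  @MVF (gameR n) playerR (fun _ => True)
    (fun g i => exists s, winning g s i).

(* Main.v *)
Require Import Defs.
From mathcomp Require Import all_boot.
From mathcomp Require Import zify.
From Stdlib Require Import Classical ClassicalEpsilon.
Set Implicit Arguments. Unset Strict Implicit. Unset Printing Implicit Defensive.

Definition rp (f : seq nat -> nat) := exists e, forall a, eval e a (f a).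

Lemma rp_ext f g : rp f -> (forall a, f a = g a) -> rp g.
Proof. by move=> [e He] E; exists e => a; rewrite -E. Qed.

Lemma rps_evals (gs : seq (seq nat -> nat)) : List.Forall rp gs ->
  exists es, forall a, evals es a [seq g a | g <- gs].
Proof.
elim: gs => [|g gs IH] H; first by exists nil => a; constructor.
inversion H as [|? ? [e He] Hs]; subst.
have [es Hes] := IH Hs.
by exists (e :: es) => a /=; constructor.
Qed.

Lemma rp_comp F gs : rp F -> List.Forall rp gs -> rp (fun a => F [seq g a | g <- gs]).
Proof.
move=> [eF HF] /rps_evals [es Hes]; exists (PComp eF es) => a.
by econstructor; [apply: Hes | apply: HF].
Qed.

Definition arg (i : nat) (a : seq nat) := nth 0 a i.
Arguments arg : simpl never.

Lemma rp_proj i : rp (arg i).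
Proof. by exists (PProj i) => a; constructor. Qed.

Lemma rp_zero : rp (fun _ => 0).
Proof. by exists PZero => a; constructor. Qed.

Lemma rp_succ f : rp f -> rp (fun a => (f a).+1).
Proof.
move=> Hf; apply: rp_ext (rp_comp (F := fun a => (head 0 a).+1) (gs := [:: f]) _ _) _.
- by exists PSucc => a; constructor.
- by constructor.
- by [].
Qed.

Lemma rp_const c : rp (fun _ => c).
Proof. elim: c => [|c IH]; [exact: rp_zero | exact: rp_succ]. Qed.

Fixpoint loop (S : nat -> nat -> nat -> nat -> nat) (k i y z : nat) : nat :=
  if k is t.+1 then S t (loop S t i y z) y z else i.

Definition prim1 f := rp (fun a => f (arg 0 a)).
Definition prim2 f := rp (fun a => f (arg 0 a) (arg 1 a)).
Definition prim3 f := rp (fun a => f (arg 0 a) (arg 1 a) (arg 2 a)).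
Definition prim4 f := rp (fun a => f (arg 0 a) (arg 1 a) (arg 2 a) (arg 3 a)).

Lemma app1 f g1 : prim1 f -> rp g1 -> rp (fun a => f (g1 a)).
Proof.
move=> Hf H1; apply: rp_ext (rp_comp (gs := [:: g1]) Hf _) _; first by repeat constructor.
by [].
Qed.
Lemma app2 f g1 g2 : prim2 f -> rp g1 -> rp g2 -> rp (fun a => f (g1 a) (g2 a)).
Proof.
move=> Hf H1 H2; apply: rp_ext (rp_comp (gs := [:: g1; g2]) Hf _) _; first by repeat constructor.
by [].
Qed.
Lemma app3 f g1 g2 g3 : prim3 f -> rp g1 -> rp g2 -> rp g3 ->
  rp (fun a => f (g1 a) (g2 a) (g3 a)).
Proof.
move=> Hf H1 H2 H3; apply: rp_ext (rp_comp (gs := [:: g1; g2; g3]) Hf _) _; first by repeat constructor.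
by [].
Qed.
Lemma app4 f g1 g2 g3 g4 : prim4 f -> rp g1 -> rp g2 -> rp g3 -> rp g4 ->
  rp (fun a => f (g1 a) (g2 a) (g3 a) (g4 a)).
Proof.
move=> Hf H1 H2 H3 H4; apply: rp_ext (rp_comp (gs := [:: g1; g2; g3; g4]) Hf _) _; first by repeat constructor.
by [].
Qed.

Lemma rp_loop S K I Y Z : prim4 S -> rp K -> rp I -> rp Y -> rp Z ->
  rp (fun a => loop S (K a) (I a) (Y a) (Z a)).
Proof.
move=> [eS HS] HK HI HY HZ.
pose eG := PComp eS [:: PProj 0; PProj 1; PProj 3; PProj 4].
have HP : forall k i y z, eval (PPrec (PProj 0) eG) [:: k; i; y; z] (loop S k i y z).
  move=> k i y z; elim: k => [|k IH] /=; first by apply: ePrec0; constructor.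
  apply: ePrecS; first exact: IH.
  apply: (@eComp _ _ _ [:: k; loop S k i y z; y; z]); last by apply: HS.
  by repeat constructor.
have [e He] : rp (fun a => loop S (arg 0 a) (arg 1 a) (arg 2 a) (arg 3 a)).
  exists (PComp (PPrec (PProj 0) eG) [:: PProj 0; PProj 1; PProj 2; PProj 3]) => a.
  apply: (@eComp _ _ _ [:: arg 0 a; arg 1 a; arg 2 a; arg 3 a]); last by apply: HP.
  by repeat constructor.
by apply: (app4 (f := fun k i y z => loop S k i y z)) => //; exists e.
Qed.

Ltac rpt := first
  [ exact: rp_proj | exact: rp_const
  | apply: app1 | apply: app2 | apply: app3 | apply: app4 | apply: rp_loop ].

Lemma prim_add : prim2 addn.
Proof.
apply: rp_ext (@rp_loop (fun _ r _ _ => r.+1) (arg 1) (arg 0) (fun _ => 0) (fun _ => 0) _ _ _ _ _) _.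
- exact: rp_succ (rp_proj 1).
- exact: rp_proj. - exact: rp_proj. - exact: rp_const. - exact: rp_const.
- move=> a; elim: (arg 1 a) => [|k IH] /=; lia.
Qed.

Lemma prim_mul : prim2 muln.
Proof.
apply: rp_ext (@rp_loop (fun _ r y _ => r + y) (arg 1) (fun _ => 0) (arg 0) (fun _ => 0) _ _ _ _ _) _.
- exact: app2 prim_add (rp_proj 1) (rp_proj 2).
- exact: rp_proj. - exact: rp_const. - exact: rp_proj. - exact: rp_const.
- move=> a; elim: (arg 1 a) => [|k IH] /=; lia.
Qed.

Lemma prim_pred : prim1 predn.
Proof.
apply: rp_ext (@rp_loop (fun t _ _ _ => t) (arg 0) (fun _ => 0) (fun _ => 0) (fun _ => 0) _ _ _ _ _) _.
- exact: rp_proj. - exact: rp_proj. - exact: rp_const. - exact: rp_const. - exact: rp_const.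
- by move=> a /=; case: (arg 0 a).
Qed.

Lemma prim_sub : prim2 subn.
Proof.
apply: rp_ext (@rp_loop (fun _ r _ _ => r.-1) (arg 1) (arg 0) (fun _ => 0) (fun _ => 0) _ _ _ _ _) _.
- exact: app1 prim_pred (rp_proj 1).
- exact: rp_proj. - exact: rp_proj. - exact: rp_const. - exact: rp_const.
- move=> a; elim: (arg 1 a) => [|k IH] /=; lia.
Qed.

Definition ite (c x y : nat) := if c is 0 then y else x.

Lemma prim_ite : prim3 ite.
Proof.
apply: rp_ext (@rp_loop (fun _ _ y _ => y) (arg 0) (arg 2) (arg 1) (fun _ => 0) _ _ _ _ _) _.
- exact: rp_proj. - exact: rp_proj. - exact: rp_proj. - exact: rp_proj. - exact: rp_const.
- by move=> a /=; case: (arg 0 a).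
Qed.

Definition rpb (c : seq nat -> bool) := rp (fun a => nat_of_bool (c a)).

Lemma rp_if c f g : rpb c -> rp f -> rp g -> rp (fun a => if c a then f a else g a).
Proof.
move=> Hc Hf Hg; apply: rp_ext (app3 prim_ite Hc Hf Hg) _.
by move=> a; case: (c a).
Qed.

Lemma rpb_eq f g : rp f -> rp g -> rpb (fun a => f a == g a).
Proof.
move=> Hf Hg.
have H : rp (fun a => ite ((f a - g a) + (g a - f a)) 0 1).
  apply: app3 prim_ite (app2 prim_add (app2 prim_sub Hf Hg) (app2 prim_sub Hg Hf)) (rp_const 0) (rp_const 1).
apply: rp_ext H _ => a; rewrite /ite.
case E: (_ + _) => [|m]; case: eqP => //; lia.
Qed.

Lemma rpb_lt f g : rp f -> rp g -> rpb (fun a => f a < g a).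
Proof.
move=> Hf Hg.
have H : rp (fun a => ite (g a - f a) 1 0).
  exact: app3 prim_ite (app2 prim_sub Hg Hf) (rp_const 1) (rp_const 0).
apply: rp_ext H _ => a; rewrite /ite.
case E: (_ - _) => [|m]; case: ltnP => //; lia.
Qed.

Lemma rpb_le f g : rp f -> rp g -> rpb (fun a => f a <= g a).
Proof. move=> Hf Hg; exact: rpb_lt Hf (rp_succ Hg). Qed.

Lemma rpb_and c d : rpb c -> rpb d -> rpb (fun a => c a && d a).
Proof.
move=> Hc Hd; apply: rp_ext (rp_if Hc Hd (rp_const 0)) _ => a.
by case: (c a).
Qed.

Lemma rpb_or c d : rpb c -> rpb d -> rpb (fun a => c a || d a).
Proof.
move=> Hc Hd; apply: rp_ext (rp_if Hc (rp_const 1) Hd) _ => a.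
by case: (c a).
Qed.

Lemma rpb_neg c : rpb c -> rpb (fun a => ~~ c a).
Proof.
move=> Hc; apply: rp_ext (rp_if Hc (rp_const 0) (rp_const 1)) _ => a.
by case: (c a).
Qed.

Lemma rpb_const b : rpb (fun _ => b).
Proof. exact: rp_const. Qed.

Lemma rp_nb c : rpb c -> rp (fun a => nat_of_bool (c a)).
Proof. by []. Qed.

Lemma rp_add f g : rp f -> rp g -> rp (fun a => f a + g a).
Proof. exact: app2 prim_add. Qed.
Lemma rp_mul f g : rp f -> rp g -> rp (fun a => f a * g a).
Proof. exact: app2 prim_mul. Qed.
Lemma rp_sub f g : rp f -> rp g -> rp (fun a => f a - g a).
Proof. exact: app2 prim_sub. Qed.
Lemma rp_pred f : rp f -> rp (fun a => (f a).-1).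
Proof. exact: app1 prim_pred. Qed.

Lemma loop_par t : loop (fun _ r _ _ => 1 - r) t 0 0 0 = odd t.
Proof. by elim: t => [|t IH] //=; rewrite IH; case: (odd t). Qed.

Lemma prim_odd : prim1 (fun t => nat_of_bool (odd t)).
Proof.
apply: rp_ext (@rp_loop (fun _ r _ _ => 1 - r) (arg 0) (fun _ => 0) (fun _ => 0) (fun _ => 0) _ _ _ _ _) _.
- exact: rp_sub (rp_const 1) (rp_proj 1).
- exact: rp_proj. - exact: rp_const. - exact: rp_const. - exact: rp_const.
- by move=> a; rewrite loop_par.
Qed.

Lemma prim_half : prim1 (fun x => x %/ 2).
Proof.
apply: rp_ext (@rp_loop (fun t r _ _ => r + odd t) (arg 0) (fun _ => 0) (fun _ => 0) (fun _ => 0) _ _ _ _ _) _.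
- exact: rp_add (rp_proj 1) (app1 prim_odd (rp_proj 0)).
- exact: rp_proj. - exact: rp_const. - exact: rp_const. - exact: rp_const.
- move=> a; elim: (arg 0 a) => [|t IH] //=; rewrite IH.
  have := odd_double_half t; case: (odd t) => /= E; lia.
Qed.

Lemma rp_half f : rp f -> rp (fun a => f a %/ 2).
Proof. exact: app1 prim_half. Qed.

Lemma prim_pair : prim2 pair.
Proof.
rewrite /prim2 /pair.
apply: rp_add; last exact: rp_proj.
apply: rp_half; apply: rp_mul; first exact: rp_add (rp_proj 0) (rp_proj 1).
exact: rp_succ (rp_add (rp_proj 0) (rp_proj 1)).
Qed.

Lemma rp_pair f g : rp f -> rp g -> rp (fun a => pair (f a) (g a)).
Proof. exact: app2 prim_pair. Qed.

Definition tri s := s * s.+1 %/ 2.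
Lemma triS s : tri s.+1 = tri s + s.+1.
Proof. rewrite /tri; nia. Qed.
Lemma tri_mono s t : s <= t -> tri s <= tri t.
Proof. move=> H; rewrite /tri; apply: leq_div2r; apply: leq_mul => //. Qed.

Lemma rp_tri f : rp f -> rp (fun a => tri (f a)).
Proof. move=> H; exact: rp_half (rp_mul H (rp_succ H)). Qed.

Definition sdiag x := loop (fun t r _ _ => if t - tri r == r then r.+1 else r) x 0 0 0.

Lemma sdiag_inv x : tri (sdiag x) <= x <= tri (sdiag x) + sdiag x.
Proof.
elim: x => [|x IH] //; rewrite /sdiag /= -/(sdiag x).
case: ifP => /eqP E.
- rewrite triS; lia.
- lia.
Qed.

Lemma sdiag_uniq x s : tri s <= x <= tri s + s -> sdiag x = s.
Proof.
move=> H; have H' := sdiag_inv x.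
case: (ltngtP (sdiag x) s) => // L.
- have := tri_mono L; rewrite triS; lia.
- have := tri_mono L; rewrite triS; lia.
Qed.

Definition psnd x := x - tri (sdiag x).
Definition pfst x := sdiag x - psnd x.

Lemma sdiag_pair a b : sdiag (pair a b) = a + b.
Proof. apply: sdiag_uniq; rewrite /pair -/(tri (a+b)); lia. Qed.

Lemma psnd_pair a b : psnd (pair a b) = b.
Proof. rewrite /psnd sdiag_pair /pair -/(tri (a+b)); lia. Qed.

Lemma pfst_pair a b : pfst (pair a b) = a.
Proof. rewrite /pfst psnd_pair sdiag_pair; lia. Qed.

Lemma pair_surj x : pair (pfst x) (psnd x) = x.
Proof.
have H := sdiag_inv x; rewrite /pair /pfst /psnd.
have -> : sdiag x - (x - tri (sdiag x)) + (x - tri (sdiag x)) = sdiag x by lia.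
rewrite -/(tri (sdiag x)); lia.
Qed.

Lemma psnd_le x : psnd x <= x.
Proof. rewrite /psnd; lia. Qed.

Lemma prim_sdiag : prim1 sdiag.
Proof.
apply: rp_ext (@rp_loop (fun t r _ _ => if t - tri r == r then r.+1 else r) (arg 0) (fun _ => 0) (fun _ => 0) (fun _ => 0) _ _ _ _ _) _.
- apply: rp_if; last exact: rp_proj.
  + apply: rpb_eq; last exact: rp_proj.
    exact: rp_sub (rp_proj 0) (rp_tri (rp_proj 1)).
  + exact: rp_succ (rp_proj 1).
- exact: rp_proj. - exact: rp_const. - exact: rp_const. - exact: rp_const.
- by [].
Qed.

Lemma rp_psnd f : rp f -> rp (fun a => psnd (f a)).
Proof. move=> H; exact: rp_sub H (rp_tri (app1 prim_sdiag H)). Qed.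
Lemma rp_pfst f : rp f -> rp (fun a => pfst (f a)).
Proof. move=> H; exact: rp_sub (app1 prim_sdiag H) (rp_psnd H). Qed.

Definition tailn t c := loop (fun _ r _ _ => psnd r.-1) t c 0 0.
Definition elem t c := pfst (tailn t c).-1.
Definition avail t c := tailn t c != 0.

Lemma rp_tailn f g : rp f -> rp g -> rp (fun a => tailn (f a) (g a)).
Proof.
move=> Hf Hg; apply: (@rp_loop (fun _ r _ _ => psnd r.-1)) => //; try exact: rp_const.
exact: rp_psnd (rp_pred (rp_proj 1)).
Qed.
Lemma rp_elem f g : rp f -> rp g -> rp (fun a => elem (f a) (g a)).
Proof. move=> Hf Hg; exact: rp_pfst (rp_pred (rp_tailn Hf Hg)). Qed.
Lemma rpb_avail f g : rp f -> rp g -> rpb (fun a => avail (f a) (g a)).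
Proof. move=> Hf Hg; exact: rpb_neg (rpb_eq (rp_tailn Hf Hg) (rp_const 0)). Qed.

Lemma tailn_code t s : tailn t (seqcode s) = seqcode (drop t s).
Proof.
elim: t s => [|t IH] s; first by rewrite drop0.
rewrite /tailn /= -/(tailn t (seqcode s)) IH.
have -> : drop t.+1 s = behead (drop t s) by rewrite -drop1 drop_drop add1n.
by case: (drop t s) => [|x s'] //=; rewrite psnd_pair.
Qed.

Lemma size_code s : size s <= seqcode s.
Proof. elim: s => [|x s IH] //=; rewrite /pair; lia. Qed.

Lemma avail_code t s : avail t (seqcode s) = (t < size s).
Proof.
rewrite /avail tailn_code; case: ltnP => H.
- by case: (drop t s) (size_drop t s) => [|x s'] //=; lia.
- by rewrite drop_oversize.
Qed.

Lemma elem_code t s : elem t (seqcode s) = nth 0 s t.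
Proof.
rewrite /elem tailn_code -[t in nth 0 s t]addn0 -nth_drop.
case: (ltnP t (size s)) => H.
- by case: (drop t s) (size_drop t s) => [|x s'] /=; [lia | rewrite pfst_pair].
- by rewrite drop_oversize.
Qed.

Fixpoint decf (f c : nat) : seq nat :=
  if f is f'.+1 then (if c is c'.+1 then pfst c' :: decf f' (psnd c') else [::]) else [::].
Definition decode c := decf c c.

Lemma decf_ok f c : c <= f -> seqcode (decf f c) = c.
Proof.
elim: f c => [|f IH] [|c] //= H.
rewrite IH ?pair_surj //; have := psnd_le c; lia.
Qed.

Lemma decode_ok c : seqcode (decode c) = c.
Proof. exact: decf_ok. Qed.

Lemma seqcode_inj : injective seqcode.
Proof.
elim=> [|x s IH] [|y t] //= [E].
have E1 := pfst_pair x (seqcode s); rewrite E pfst_pair in E1.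
have E2 := psnd_pair x (seqcode s); rewrite E psnd_pair in E2.
by rewrite E1 (IH t (esym E2)).
Qed.

Lemma wcode_inj : injective wcode.
Proof.
move=> w1 w2 /seqcode_inj; apply: inj_map => -[] [] //.
Qed.

Lemma bprefix_eq (x : nat -> bool) (w : seq bool) :
  bprefix x (size w) = w <-> forall j, j < size w -> x j = nth false w j.
Proof.
split.
- by move=> E j Hj; have := congr1 (fun l => nth false l j) E; rewrite /bprefix nth_mkseq.
- move=> H; apply: (@eq_from_nth _ false); first by rewrite size_mkseq.
  by move=> j; rewrite size_mkseq => Hj; rewrite nth_mkseq // H.
Qed.

Lemma nth_blk k r : nth false (rcons (nseq k true) false) r = (r < k).
Proof.
rewrite nth_rcons size_nseq; case: (ltnP r k) => H; first by rewrite nth_nseq H.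
by case: (r == k).
Qed.

Definition unary (ks : seq nat) : seq bool :=
  flatten [seq rcons (nseq k true) false | k <- ks].

Lemma unary_rcons ks k : unary (rcons ks k) = unary ks ++ rcons (nseq k true) false.
Proof. by rewrite /unary map_rcons flatten_rcons. Qed.

Lemma unary_cat ks ks' : unary (ks ++ ks') = unary ks ++ unary ks'.
Proof. by rewrite /unary map_cat flatten_cat. Qed.

Definition reach (h : seq bool) (x : nat -> bool) (ks : seq nat) :=
  forall j, j < size (h ++ unary ks) -> x j = nth false (h ++ unary ks) j.

Lemma reach_rcons h x ks k : reach h x (rcons ks k) <->
  reach h x ks /\ (forall r, r <= k -> x (size (h ++ unary ks) + r) = (r < k)).
Proof.
rewrite /reach unary_rcons catA; set W := h ++ unary ks.
split.
- move=> H; split.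
  + move=> j Hj; rewrite H; last by rewrite size_cat; lia.
    by rewrite nth_cat Hj.
  + move=> r Hr; rewrite H; last by rewrite size_cat size_rcons size_nseq; lia.
    by rewrite nth_cat ltnNge leq_addr /= addKn nth_blk.
- move=> [H1 H2] j; rewrite size_cat size_rcons size_nseq => Hj.
  rewrite nth_cat; case: ltnP => Hj2; first exact: H1.
  have -> : j = size W + (j - size W) by lia.
  by rewrite H2 ?addKn ?nth_blk //; lia.
Qed.

Fixpoint pv (v : seq bool) (ks : seq nat) (cur : nat) : seq nat * nat :=
  match v with
  | [::] => (ks, cur)
  | true :: v' => pv v' ks cur.+1
  | false :: v' => pv v' (rcons ks cur) 0
  end.

Lemma pv_nseq r v ks cur : pv (nseq r true ++ v) ks cur = pv v ks (cur + r).
Proof. by elim: r cur => [|r IH] cur /=; rewrite ?addn0 // IH addnS. Qed.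

Lemma pv_unary ks' v ks : pv (unary ks' ++ v) ks 0 = pv v (ks ++ ks') 0.
Proof.
elim: ks' ks => [|k ks' IH] ks /=; first by rewrite cats0.
rewrite -catA -cats1 -catA pv_nseq /= IH add0n.
by rewrite cat_rcons.
Qed.

Definition parse v := pv v [::] 0.

Lemma parse_ok ks r : parse (unary ks ++ nseq r true) = (ks, r).
Proof. by rewrite /parse pv_unary -[nseq r true]cats0 pv_nseq. Qed.

Definition own (m : nat) : player := if odd m then P2 else P1.

Definition sphi (wit : seq nat -> nat) (v : seq bool) : bool :=
  let: (ks, r) := parse v in r < wit ks.

Definition turn_ok (n : nat) (d : seq bool -> player) (h : seq bool) :=
  forall ks r, size ks < n -> d (h ++ unary ks ++ nseq r true) = own (size ks).

Lemma no_stall n d h s wit i x ks :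
  turn_ok n d h -> (forall v, s (h ++ v) = sphi wit v) ->
  consistent d s i x -> size ks < n -> own (size ks) = i ->
  reach h x ks -> reach h x (rcons ks (wit ks)).
Proof.
move=> Hd Hs Hc Hn Ho Hr; apply/reach_rcons; split => //.
set W := h ++ unary ks.
have Hval : forall r', bprefix x (size W + r') = W ++ nseq r' true ->
    x (size W + r') = (r' < wit ks).
  move=> r' E; rewrite Hc E /W -catA ?Hd //.
  by rewrite Hs /sphi parse_ok.
have Hpre : forall r', r' <= wit ks -> bprefix x (size W + r') = W ++ nseq r' true.
  elim=> [|r' IH] Hr'.
  - by rewrite addn0 cats0; apply/bprefix_eq.
  - rewrite addnS /bprefix mkseqS -/(bprefix _ _) IH ?(ltnW Hr') //.
    rewrite Hval ?IH ?(ltnW Hr') // Hr'.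
    rewrite -cats1 -catA; congr (_ ++ _).
    by elim: (r') => [|m IHm] //=; rewrite IHm.
by move=> r Hrw; apply: Hval; apply: Hpre.
Qed.

Lemma reach_uniq h x ks k k' :
  reach h x (rcons ks k) -> reach h x (rcons ks k') -> k = k'.
Proof.
move=> /reach_rcons [_ H1] /reach_rcons [_ H2].
case: (ltngtP k k') => // L.
- by have := H2 k (ltnW L); rewrite H1 // ltnn L.
- by have := H1 k' (ltnW L); rewrite H2 // ltnn L.
Qed.

Lemma good_play n d h s wit i x (G : seq nat -> Prop) :
  turn_ok n d h -> (forall v, s (h ++ v) = sphi wit v) -> consistent d s i x ->
  G [::] ->
  (forall ks, size ks < n -> own (size ks) <> i -> G ks -> forall k, G (rcons ks k)) ->
  (forall ks, size ks < n -> own (size ks) = i -> G ks -> G (rcons ks (wit ks))) ->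
  forall ks, size ks <= n -> reach h x ks -> G ks.
Proof.
move=> Hd Hs Hc G0 G1 G2; elim/last_ind => [|ks k IH] //.
rewrite size_rcons => Hn Hr.
have [Hr' _] := (reach_rcons h x ks k).1 Hr.
have Gk := IH (ltnW Hn) Hr'.
case Ho: (own (size ks)).
- case: i Hc G1 G2 Hs => Hc G1 G2 Hs.
  + have := no_stall Hd Hs Hc Hn Ho Hr'.
    move=> /(reach_uniq Hr) ->; exact: G2.
  + by apply: G1 => //; rewrite Ho.
- case: i Hc G1 G2 Hs => Hc G1 G2 Hs.
  + by apply: G1 => //; rewrite Ho.
  + have := no_stall Hd Hs Hc Hn Ho Hr'.
    move=> /(reach_uniq Hr) ->; exact: G2.
Qed.

Lemma stall_play n d h s wit i x ks :
  turn_ok n d h -> (forall v, s (h ++ v) = sphi wit v) -> consistent d s i x ->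
  size ks < n -> reach h x ks -> (forall k, ~ reach h x (rcons ks k)) ->
  own (size ks) <> i.
Proof.
move=> Hd Hs Hc Hn Hr Hst Ho.
exact: Hst _ (no_stall Hd Hs Hc Hn Ho Hr).
Qed.

Lemma dichotomy h x n : reach h x [::] -> forall m, m <= n ->
  (exists ks, size ks = m /\ reach h x ks) \/
  (exists ks, size ks < m /\ reach h x ks /\ forall k, ~ reach h x (rcons ks k)).
Proof.
move=> H0; elim=> [|m IH] Hm; first by left; exists [::].
case: (IH (ltnW Hm)) => [[ks [Hs Hr]] | [ks [Hs [Hr Hst]]]].
- case: (Classical_Prop.classic (exists k, reach h x (rcons ks k))) => [[k Hk]|Hno].
  + by left; exists (rcons ks k); rewrite size_rcons Hs.
  + right; exists ks; split; first by rewrite Hs.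
    by split => // k Hk; apply: Hno; exists k.
- by right; exists ks; split => //; lia.
Qed.

Definition Wh n h (P : seq nat -> bool) (x : nat -> bool) :=
  (exists ks, size ks = n /\ reach h x ks /\ P ks = false) \/
  (exists ks, size ks < n /\ odd (size ks) /\ reach h x ks /\
     forall k, ~ reach h x (rcons ks k)).

Lemma qalt_ext m u (P Q : seq nat -> Prop) : (forall l, P l <-> Q l) ->
  qalt m u P <-> qalt m u Q.
Proof.
elim: m u P Q => [|m IH] u P Q H /=; first exact: H.
case: u.
- split=> A k; [apply/(IH _ (fun ks => P (k :: ks))) | apply/(IH _ _ (fun ks => Q (k :: ks)))]; 
    try exact: A; by move=> l; rewrite H.
- split=> -[k A]; exists k; [apply/(IH _ (fun ks => P (k :: ks))) | apply/(IH _ _ (fun ks => Q (k :: ks)))];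
    try exact: A; by move=> l; rewrite H.
Qed.

Definition Good n (P : seq nat -> bool) (ks : seq nat) :=
  qalt (n - size ks) (~~ odd (size ks)) (fun rest => P (ks ++ rest)).

Lemma Good_step n P ks : size ks < n ->
  (Good n P ks <-> if ~~ odd (size ks) then forall k, Good n P (rcons ks k)
                  else exists k, Good n P (rcons ks k)).
Proof.
move=> Hn.
have E : forall k, qalt (n - (size ks).+1) (odd (size ks)) (fun l => P (ks ++ k :: l))
   <-> Good n P (rcons ks k).
  move=> k; rewrite /Good size_rcons /= negbK; apply: qalt_ext => l; by rewrite cat_rcons.
rewrite {1}/Good.
have -> : n - size ks = (n - (size ks).+1).+1 by lia.
case Od: (odd (size ks)) E => /= E.
- by split=> -[k A]; exists k; apply/E.
- by split=> A k; apply/E.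
Qed.

Lemma Good_end n P ks : size ks = n -> (Good n P ks <-> P ks).
Proof. by move=> Hn; rewrite /Good Hn subnn /= cats0. Qed.

Definition choose_nat (Q : nat -> Prop) : nat :=
  match ClassicalEpsilon.excluded_middle_informative (exists k, Q k) with
  | left H => proj1_sig (ClassicalEpsilon.constructive_indefinite_description _ H)
  | right _ => 0
  end.

Lemma choose_nat_spec Q : (exists k, Q k) -> Q (choose_nat Q).
Proof.
move=> H; rewrite /choose_nat; case: ClassicalEpsilon.excluded_middle_informative => // H'.
exact: proj2_sig (ClassicalEpsilon.constructive_indefinite_description _ H').
Qed.

Definition wG n P ks := choose_nat (fun k => Good n P (rcons ks k)).
Definition wB n P ks := choose_nat (fun k => ~ Good n P (rcons ks k)).

Lemma phi_P2 n d h P s x : turn_ok n d h -> (forall v, s (h ++ v) = sphi (wG n P) v) ->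
  consistent d s P2 x -> reach h x [::] -> Good n P [::] -> ~ Wh n h P x.
Proof.
move=> Hd Hs Hc H0 G0.
have HG := good_play Hd Hs Hc G0.
have {}HG : forall ks, size ks <= n -> reach h x ks -> Good n P ks.
  apply: HG.
  - move=> ks Hn Ho /(Good_step _ Hn); rewrite /own in Ho.
    by case: (odd (size ks)) Ho.
  - move=> ks Hn Ho /(Good_step _ Hn); rewrite /own in Ho.
    case: (odd (size ks)) Ho => //= _ Ex.
    by apply: (choose_nat_spec (Q := fun k => Good n P (rcons ks k))).
move=> [[ks [Hn [Hr HP]]] | [ks [Hn [Ho [Hr Hst]]]]].
- have := HG ks (eq_leq Hn) Hr; rewrite Good_end // HP //.
- have := stall_play Hd Hs Hc Hn Hr Hst; rewrite /own Ho; by [].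
Qed.

Lemma phi_P1 n d h P s x : turn_ok n d h -> (forall v, s (h ++ v) = sphi (wB n P) v) ->
  consistent d s P1 x -> reach h x [::] -> ~ Good n P [::] -> Wh n h P x.
Proof.
move=> Hd Hs Hc H0 G0.
have HG := good_play (G := fun ks => ~ Good n P ks) Hd Hs Hc G0.
have {}HG : forall ks, size ks <= n -> reach h x ks -> ~ Good n P ks.
  apply: HG.
  - move=> ks Hn Ho; rewrite (Good_step _ Hn); rewrite /own in Ho.
    case: (odd (size ks)) Ho => //= _ A k B; apply: A; by exists k.
  - move=> ks Hn Ho; rewrite (Good_step _ Hn); rewrite /own in Ho.
    case: (odd (size ks)) Ho => //= _ A.
    apply: (choose_nat_spec (Q := fun k => ~ Good n P (rcons ks k))).
    apply: Classical_Pred_Type.not_all_ex_not => B; exact: A.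
case: (dichotomy H0 (leqnn n)) => [[ks [Hn Hr]] | [ks [Hn [Hr Hst]]]].
- left; exists ks; split => //; split => //.
  have := HG ks (eq_leq Hn) Hr; rewrite Good_end //; by case: (P ks).
- right; exists ks; split => //; split; last by split.
  have := stall_play Hd Hs Hc Hn Hr Hst; rewrite /own; by case: (odd (size ks)).
Qed.

Lemma reach_cat h x ks ks' : reach h x (ks ++ ks') -> reach h x ks.
Proof.
move=> H j Hj; rewrite H; last by rewrite unary_cat catA size_cat; lia.
by rewrite unary_cat catA nth_cat Hj.
Qed.

Lemma reach_shift h x k ks : reach h x (k :: ks) <-> reach (h ++ unary [:: k]) x ks.
Proof. by rewrite /reach -catA -unary_cat. Qed.

Lemma reach_uniq_all h x ks ks' : size ks = size ks' -> reach h x ks -> reach h x ks' -> ks = ks'.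
Proof.
elim: ks ks' h => [|k ks IH] [|k' ks'] h //= [E] H1 H2.
have Hk : k = k'.
  apply: (@reach_uniq h x [::] k k').
  - by apply: (@reach_cat _ _ [:: k] ks).
  - by apply: (@reach_cat _ _ [:: k'] ks').
subst k'; congr (_ :: _); apply: (IH ks' (h ++ unary [:: k])) => //; exact/reach_shift.
Qed.

Lemma is_min_uniq n U x b b' : is_min_idx n U x b -> is_min_idx n U x b' -> b = b'.
Proof.
move=> [H1 [H2 H3]] [H1' [H2' H3']].
case: (ltngtP b b') => // L.
- by have := H3' b L; have := H2 (leq_trans L H1'); tauto.
- by have := H3 b' L; have := H2' (leq_trans L H1); tauto.
Qed.

Lemma diffP n U x b : is_min_idx n U x b -> (diff_set n U x <-> odd b <> odd n).
Proof.
move=> Hb; split.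
- by move=> [b' [Hb' O]]; rewrite (is_min_uniq Hb Hb').
- by move=> O; exists b.
Qed.

Lemma reach_take h x ks m : reach h x ks -> reach h x (take m ks).
Proof. by move=> H; apply: (@reach_cat _ _ _ (drop m ks)); rewrite cat_take_drop. Qed.

Lemma reach_more h x ks ks' : reach h x ks -> reach h x ks' -> size ks < size ks' ->
  exists k, reach h x (rcons ks k).
Proof.
move=> H1 H2 L.
exists (nth 0 ks' (size ks)).
have E : take (size ks).+1 ks' = rcons (take (size ks) ks') (nth 0 ks' (size ks)).
  by rewrite -take_nth.
have E2 : take (size ks) ks' = ks.
  apply: (reach_uniq_all (h := h) (x := x)) => //; last exact: reach_take.
  by rewrite size_take L.
by rewrite -{1}E2 -E; apply: reach_take.
Qed.

Lemma char_diff n (U : nat -> (nat -> bool) -> Prop) h (P : seq nat -> bool) x :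
  0 < n -> reach h x [::] ->
  (forall b, 0 < b < n -> (U b x <-> exists ks, size ks = n - b /\ reach h x ks)) ->
  (U 0 x <-> exists ks, size ks = n /\ reach h x ks /\ P ks != odd n) ->
  (diff_set n U x <-> Wh n h P x).
Proof.
move=> Hn H0 HU HU0.
case: (dichotomy H0 (leqnn n)) => [[ks [Hs Hr]] | [ks [Hs [Hr Hst]]]].
- have NW2 : ~ (exists ks', size ks' < n /\ odd (size ks') /\ reach h x ks' /\
     forall k, ~ reach h x (rcons ks' k)).
    move=> [ks' [L [_ [Hr' Hst']]]].
    have [k Hk] := reach_more Hr' Hr ltac:(by rewrite Hs).
    exact: Hst' Hk.
  case: (boolP (P ks != odd n)) => HP.
  + have Hm : is_min_idx n U x 0.
      split => //; split => //; first by move=> _; apply/HU0; exists ks.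
    rewrite (diffP Hm) /Wh; split.
    * move=> O; left; exists ks; split => //; split => //.
      by move: HP O; case: (P ks); case: (odd n).
    * move=> [[ks' [Hs' [Hr' HP']]] | //].
      have E : ks' = ks by apply: (reach_uniq_all (h := h) (x := x)); rewrite ?Hs ?Hs'.
      subst ks'; move: HP HP'; case: (P ks); case: (odd n) => //.
  + have Hm : is_min_idx n U x 1.
      split => //; split.
      * move=> L; apply/HU; first lia.
        exists (take (n - 1) ks); split; last exact: reach_take.
        by rewrite size_take Hs; case: ltnP => //; lia.
      * move=> c; rewrite ltnS leqn0 => /eqP ->.
        move=> /HU0 [ks' [Hs' [Hr' HP']]].
        have E : ks' = ks by apply: (reach_uniq_all (h := h) (x := x)); rewrite ?Hs ?Hs'.
        by subst ks'; rewrite HP' in HP.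
    rewrite (diffP Hm) /Wh; split.
    * move=> O; left; exists ks; split => //; split => //.
      by move: HP O; case: (P ks); case: (odd n).
    * move=> [[ks' [Hs' [Hr' HP']]] | //].
      have E : ks' = ks by apply: (reach_uniq_all (h := h) (x := x)); rewrite ?Hs ?Hs'.
      subst ks'; move: HP HP'; case: (P ks); case: (odd n) => //.
- have NR : forall ks', reach h x ks' -> size ks' <= size ks.
    move=> ks' Hr'; rewrite leqNgt; apply/negP => L.
    have [k Hk] := reach_more Hr Hr' L; exact: Hst _ Hk.
  have Hm : is_min_idx n U x (n - size ks).
    split; first lia; split.
    + move=> L; apply/HU; first lia.
      exists ks; split => //; lia.
    + move=> c L; case: c L => [|c] L.
      * move=> /HU0 [ks' [Hs' [Hr' _]]]; have := NR _ Hr'; lia.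
      * move=> /HU [|ks' [Hs' Hr']]; first lia.
        have := NR _ Hr'; lia.
  rewrite (diffP Hm) /Wh; split.
  + move=> O; right; exists ks; split => //; split => //.
    have Hpar : odd n = odd (n - size ks) (+) odd (size ks) by rewrite -oddD subnK //; lia.
    move: O; rewrite Hpar; by case: (odd (n - size ks)); case: (odd (size ks)).
  + move=> [[ks' [Hs' [Hr' _]]] | [ks' [L [O [Hr' Hst']]]]].
    * have := NR _ Hr'; lia.
    * have E : ks' = ks.
        apply: (reach_uniq_all (h := h) (x := x)) => //.
        have := NR _ Hr'; case: (ltngtP (size ks') (size ks)) => // L2 _.
        by have [k Hk] := reach_more Hr' Hr L2; case: (Hst' _ Hk).
      subst ks'; have Hpar : odd n = odd (n - size ks) (+) odd (size ks) by rewrite -oddD subnK //; lia.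
      rewrite Hpar O; by case: (odd (n - size ks)).
Qed.

Fixpoint bld (f : seq bool -> bool) (k : nat) : seq bool :=
  if k is k'.+1 then rcons (bld f k') (f (bld f k')) else [::].

Lemma bprefix_bld f k : bprefix (fun j => f (bld f j)) k = bld f k.
Proof. by elim: k => [|k IH] //=; rewrite /bprefix mkseqS -/(bprefix _ _) IH. Qed.

Lemma combine_play (d : seq bool -> player) s1 s2 :
  exists x, consistent d s1 P1 x /\ consistent d s2 P2 x.
Proof.
pose f w := if d w is P1 then s1 w else s2 w.
exists (fun j => f (bld f j)); split => k; rewrite bprefix_bld /f => ->; by [].
Qed.

Lemma open_of_gen (e : baire) (cond : nat -> bool) (W : nat -> seq bool) x :
  (forall j, e j = if cond j then (wcode (W j)).+1 else 0) ->
  (open_of e x <-> exists j, cond j /\ bprefix x (size (W j)) = W j).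
Proof.
move=> He; split.
- move=> [j [w [Ej Hw]]]; exists j; move: Ej; rewrite He.
  case: (cond j) => // -[] /wcode_inj ->; by [].
- move=> [j [Cj Hj]]; exists j, (W j); by rewrite He Cj.
Qed.

Lemma decode_code s : decode (seqcode s) = s.
Proof. apply: seqcode_inj; exact: decode_ok. Qed.

Lemma loop_foldr S y z (g : nat -> nat) f base m :
  (forall t r, S t r y z = f (g (m.-1 - t)) r) ->
  loop S m base y z = foldr f base (mkseq g m).
Proof.
move=> HS.
have H : forall t, t <= m -> loop S t base y z = foldr f base (drop (m - t) (mkseq g m)).
  elim=> [|t IH] Ht /=; first by rewrite subn0 drop_oversize // size_mkseq.
  rewrite IH ?(ltnW Ht) // HS.
  rewrite [drop (m - t.+1) _](drop_nth 0); last by rewrite size_mkseq; lia.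
  rewrite nth_mkseq /=; last lia.
  have -> : (m - t.+1).+1 = m - t by lia.
  by have -> : m.-1 - t = m - t.+1 by lia.
by rewrite H // subnn drop0.
Qed.

Lemma tuple_rcons ks k : Defs.tuple (rcons ks k) = foldr pair k ks.
Proof.
elim: ks => [|a ks IH] //=.
rewrite -IH; by case: (rcons ks k) (size_rcons ks k).
Qed.

Definition bone c := (pair 1 c).+1.
Definition bzero c := (pair 0 c).+1.
Definition ublk k c := iter k bone (bzero c).

Lemma code_blk k tl : seqcode (map nat_of_bool (rcons (nseq k true) false ++ tl)) =
  ublk k (seqcode (map nat_of_bool tl)).
Proof. by elim: k => [|k IH] //=; rewrite IH. Qed.

Lemma code_unary ks tl : seqcode (map nat_of_bool (unary ks ++ tl)) =
  foldr ublk (seqcode (map nat_of_bool tl)) ks.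
Proof.
elim: ks => [|k ks IH] //=.
by rewrite /unary /= -catA code_blk -/(unary ks) IH.
Qed.

Lemma computes_of (e : prf) (F : seq nat -> nat) (p q : baire) (need : nat -> nat) :
  (forall a, eval e a (F a)) ->
  (forall N k, F [:: pair N (seqcode (Defs.prefix p k))] = if need N <= k then (q N).+1 else 0) ->
  computes e p q.
Proof.
move=> He HF N; exists (need N); split.
- by have := He [:: pair N (seqcode (Defs.prefix p (need N)))]; rewrite HF leqnn.
- move=> j Hj; have := He [:: pair N (seqcode (Defs.prefix p j))]; rewrite HF.
  by rewrite leqNgt Hj.
Qed.

Lemma prefix_code_avail p k t : avail t (seqcode (Defs.prefix p k)) = (t < k).
Proof. by rewrite avail_code size_mkseq. Qed.

Lemma prefix_code_elem p k t : t < k -> elem t (seqcode (Defs.prefix p k)) = p t.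
Proof. by move=> H; rewrite elem_code nth_mkseq. Qed.

Lemma rp_ublk K Cf : rp K -> rp Cf -> rp (fun a => ublk (K a) (Cf a)).
Proof.
move=> HK HC.
apply: rp_ext (@rp_loop (fun _ r _ _ => bone r) K (fun a => bzero (Cf a)) (fun _ => 0) (fun _ => 0) _ HK _ _ _) _.
- exact: rp_succ (rp_pair (rp_const 1) (rp_proj 1)).
- exact: rp_succ (rp_pair (rp_const 0) HC).
- exact: rp_const. - exact: rp_const.
- by move=> a; rewrite /ublk; elim: (K a) => [|k IH] //=; rewrite IH.
Qed.

Definition wcU (m j : nat) := loop (fun t r y z => ublk (elem (z.-1 - t) y) r) m 0 j m.

Lemma rp_wcU M J : rp M -> rp J -> rp (fun a => wcU (M a) (J a)).
Proof.
move=> HM HJ; apply: rp_loop => //; last exact: rp_const.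
apply: rp_ublk; last exact: rp_proj.
apply: rp_elem; last exact: rp_proj.
exact: rp_sub (rp_pred (rp_proj 3)) (rp_proj 0).
Qed.

Lemma wcU_ok m L : wcU m (seqcode L) = wcode (unary (mkseq (nth 0 L) m)).
Proof.
rewrite /wcU (@loop_foldr _ _ _ (nth 0 L) ublk); last by move=> t r; rewrite elem_code.
by rewrite /wcode -[unary _]cats0 code_unary.
Qed.

Definition tupc (m j : nat) :=
  loop (fun t r y z => pair (elem (z.-1 - t) y) r) m.-1 (elem m.-1 j) j m.-1.

Lemma rp_tupc M J : rp M -> rp J -> rp (fun a => tupc (M a) (J a)).
Proof.
move=> HM HJ; apply: rp_loop => //.
- apply: rp_pair; last exact: rp_proj.
  apply: rp_elem; last exact: rp_proj.
  exact: rp_sub (rp_pred (rp_proj 3)) (rp_proj 0).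
- exact: rp_pred.
- exact: rp_elem (rp_pred HM) HJ.
- exact: rp_pred.
Qed.

Lemma tupc_ok m L : 0 < m -> tupc m (seqcode L) = Defs.tuple (mkseq (nth 0 L) m).
Proof.
case: m => // m _.
rewrite /tupc mkseqS tuple_rcons /= elem_code.
rewrite (@loop_foldr _ _ _ (nth 0 L) pair) //.
by move=> t r; rewrite elem_code.
Qed.

Definition cz (u : nat) :=
  loop (fun t r y _ => r + (avail t y && (elem t y == 0))) u 0 u 0.

Lemma rp_cz U : rp U -> rp (fun a => cz (U a)).
Proof.
move=> HU; apply: rp_loop => //; last exact: rp_const.
- apply: rp_add; first exact: rp_proj.
  apply: rpb_and; first exact: rpb_avail (rp_proj 0) (rp_proj 2).
  exact: rpb_eq (rp_elem (rp_proj 0) (rp_proj 2)) (rp_const 0).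
- exact: rp_const.
Qed.

Lemma cz_ok L : cz (seqcode L) = count_mem false (map (fun a => a != 0) L).
Proof.
rewrite /cz.
have H : forall t, loop (fun t r y _ => r + (avail t y && (elem t y == 0))) t 0 (seqcode L) 0
   = count_mem false (map (fun a => a != 0) (take t L)).
  elim=> [|t IH] /=; first by rewrite take0.
  rewrite IH avail_code elem_code.
  case: (ltnP t (size L)) => Ht.
  - rewrite (take_nth 0 Ht) map_rcons -cats1 count_cat /=.
    by case: (nth 0 L t == 0) (nth 0 L t) => -[|?]; rewrite ?addn0 ?addn1 //=.
  - by rewrite !take_oversize ?addn0 //; lia.
by rewrite H take_oversize // size_code.
Qed.

Lemma count_unary ks r : count_mem false (unary ks ++ nseq r true) = size ks.
Proof.
elim: ks => [|k ks IH] /=; first by elim: r => [|r IH] //=.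
by rewrite /unary /= -catA count_cat -/(unary ks) IH -cats1 count_cat /= count_nseq /= mul0n.
Qed.

Definition dL n (w : seq bool) : player :=
  let z := count_mem false w in if z < n then own z else P1.

Lemma turn_dL n : turn_ok n (dL n) [::].
Proof. by move=> ks r Hn; rewrite /dL /= count_unary Hn. Qed.

Definition PL (p : baire) (ks : seq nat) : bool := p (Defs.tuple ks) == 1.

Definition pc n z := if z < n then (if odd z then 2 else 1) else 1.

Definition qL n (p : baire) (N : nat) : nat :=
  if odd N then
    let v := N %/ 2 in let b := pfst v in let L := decode (psnd v) in
    if b == 0 then
      (if PL p (mkseq (nth 0 L) n) != odd n then (wcode (unary (mkseq (nth 0 L) n))).+1 else 0)
    else if b < n then (wcode (unary (mkseq (nth 0 L) (n - b)))).+1 else 0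
  else pc n (count_mem false (map (fun a => a != 0) (decode (N %/ 2)))).

Definition needL n N :=
  if odd N && (pfst (N %/ 2) == 0) then
    (Defs.tuple (mkseq (nth 0 (decode (psnd (N %/ 2)))) n)).+1 else 0.

Definition FH n (a : seq nat) : nat :=
  let x := arg 0 a in let N := pfst x in let c := psnd x in
  if odd N then
    let v := N %/ 2 in let b := pfst v in let j := psnd v in
    if b == 0 then
      (let idx := tupc n j in
       if avail idx c then (if (elem idx c == 1) != odd n then (wcU n j).+2 else 1) else 0)
    else if b < n then (wcU (n - b) j).+2 else 1
  else (pc n (cz (N %/ 2))).+1.

Lemma rpb_beq c d : rpb c -> rpb d -> rpb (fun a => c a == d a).
Proof.
move=> Hc Hd; apply: rp_ext (rpb_eq Hc Hd) _ => a.
by case: (c a); case: (d a).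
Qed.

Lemma rpb_odd f : rp f -> rpb (fun a => odd (f a)).
Proof. exact: app1 prim_odd. Qed.

Lemma rp_pc n f : rp f -> rp (fun a => pc n (f a)).
Proof.
move=> H; rewrite /pc; apply: rp_if; first exact: rpb_lt H (rp_const n).
- exact: rp_if (rpb_odd H) (rp_const 2) (rp_const 1).
- exact: rp_const.
Qed.

Lemma rp_FH n : rp (FH n).
Proof.
rewrite /FH.
have HN := rp_pfst (rp_proj 0).
have Hc := rp_psnd (rp_proj 0).
have Hv := rp_half HN.
have Hb := rp_pfst Hv.
have Hj := rp_psnd Hv.
apply: rp_if; first exact: rpb_odd HN.
- apply: rp_if; first exact: rpb_eq Hb (rp_const 0).
  + have Hi := rp_tupc (rp_const n) Hj.
    apply: rp_if; first exact: rpb_avail Hi Hc.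
    * apply: rp_if; last exact: rp_const.
      - apply: rpb_neg; apply: rpb_beq.
        + exact: rpb_eq (rp_elem Hi Hc) (rp_const 1).
        + exact: rpb_odd (rp_const n).
      - exact: rp_succ (rp_succ (rp_wcU (rp_const n) Hj)).
    * exact: rp_const.
  + apply: rp_if; first exact: rpb_lt Hb (rp_const n).
    * exact: rp_succ (rp_succ (rp_wcU (rp_sub (rp_const n) Hb) Hj)).
    * exact: rp_const.
- exact: rp_succ (rp_pc n (rp_cz (rp_half HN))).
Qed.

Lemma neq_bool (a b : bool) : (a != b) = ~~ (a == b).
Proof. by []. Qed.

Lemma FH_spec n p N k : 0 < n ->
  FH n [:: pair N (seqcode (Defs.prefix p k))] = if needL n N <= k then (qL n p N).+1 else 0.
Proof.
move=> Hn; rewrite /FH /needL /qL /arg /= pfst_pair psnd_pair.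
case: (odd N) => /=; last by rewrite -{1}(decode_ok (N %/ 2)) cz_ok.
set j := psnd (N %/ 2); have Ej := decode_ok j; set L := decode j in Ej *.
clearbody L; rewrite -Ej.
case: eqP => Hb /=.
- rewrite tupc_ok // prefix_code_avail wcU_ok.
  case: ltnP => Hk.
  + rewrite prefix_code_elem // /PL.
    by case: (_ != _).
  + by [].
- by rewrite wcU_ok; case: (_ < n).
Qed.

Definition gL n (p : baire) : game :=
  (dL n, diff_set n (fun b => open_of (fun j => qL n p (pair b j).*2.+1))).

Lemma hdbl m : m.*2 %/ 2 = m.
Proof. lia. Qed.
Lemma hdbl1 m : m.*2.+1 %/ 2 = m.
Proof. lia. Qed.

Lemma map_nb_neq0 (w : seq bool) : map (fun a => a != 0) (map nat_of_bool w) = w.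
Proof. by elim: w => [|[] w IH] //=; rewrite IH. Qed.

Lemma names_gL n p : @names (gameR n) (qL n p) (gL n p).
Proof.
split => // w; rewrite /qL odd_double /= hdbl /wcode decode_code map_nb_neq0.
rewrite /pc /dL /=; case: (_ < n) => //; rewrite /own; by case: odd.
Qed.

Lemma reach_nil_iff x ks : reach [::] x ks <-> bprefix x (size (unary ks)) = unary ks.
Proof. by rewrite bprefix_eq. Qed.

Lemma ex_ks m (Q : seq nat -> Prop) :
  (exists j, Q (mkseq (nth 0 (decode j)) m)) <-> exists ks, size ks = m /\ Q ks.
Proof.
split.
- by move=> [j Hj]; exists (mkseq (nth 0 (decode j)) m); rewrite size_mkseq.
- move=> [ks [Hs Hq]]; exists (seqcode ks); by rewrite decode_code -Hs mkseq_nth.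
Qed.

Lemma qL_odd n p b j : qL n p (pair b j).*2.+1 =
  let L := decode j in
    if b == 0 then
      (if PL p (mkseq (nth 0 L) n) != odd n then (wcode (unary (mkseq (nth 0 L) n))).+1 else 0)
    else if b < n then (wcode (unary (mkseq (nth 0 L) (n - b)))).+1 else 0.
Proof. by rewrite /qL /= odd_double /= hdbl1 pfst_pair psnd_pair. Qed.

Lemma char_gL n p x : 0 < n -> ((gL n p).2 x <-> Wh n [::] (PL p) x).
Proof.
move=> Hn; apply: char_diff => //.
- move=> b Hb.
  rewrite (@open_of_gen _ (fun _ => true) (fun j => unary (mkseq (nth 0 (decode j)) (n - b)))).
  + rewrite (ex_ks (n - b) (fun ks => true /\ bprefix x (size (unary ks)) = unary ks)).
    split=> -[ks [Hs H]]; exists ks; split => //; first by apply/reach_nil_iff; case: H.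
    by split => //; apply/reach_nil_iff.
  + move=> j; rewrite qL_odd.
    by case: b Hb => //= b Hb; rewrite Hb.
- rewrite (@open_of_gen _ (fun j => PL p (mkseq (nth 0 (decode j)) n) != odd n)
     (fun j => unary (mkseq (nth 0 (decode j)) n))).
  + rewrite (ex_ks n (fun ks => PL p ks != odd n /\ bprefix x (size (unary ks)) = unary ks)).
    split=> -[ks [Hs [H1 H2]]]; exists ks; split => //; split => //; exact/reach_nil_iff.
  + move=> j; by rewrite qL_odd.
Qed.

Lemma phi_Good n (p : baire) (x : nat -> bool) : (forall i, p i = nat_of_bool (x i)) ->
  (phi n x <-> Good n (PL p) [::]).
Proof.
move=> Hp; rewrite /Good /phi /= subn0; apply: qalt_ext => l.
by rewrite /PL Hp; case: (x _).
Qed.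

Definition FK (a : seq nat) : nat :=
  let c := psnd (arg 0 a) in if avail 1 c then (elem 1 c == 2).+1 else 0.

Lemma rp_FK : rp FK.
Proof.
rewrite /FK; have Hc := rp_psnd (rp_proj 0).
apply: rp_if; first exact: rpb_avail (rp_const 1) Hc.
- exact: rp_succ (rpb_eq (rp_elem (rp_const 1) Hc) (rp_const 2)).
- exact: rp_const.
Qed.

Lemma lem_part n : 0 < n -> Wred (SigmaLEM n) (Win n).
Proof.
move=> Hn.
have [eH HeH] := rp_FH n.
have [eK HeK] := rp_FK.
exists eK, eH => G HG p x Hpx _.
exists (qL n p); split.
  by apply: (computes_of (need := needL n) HeH) => N k; rewrite FH_spec.
split; first by exists (gL n p) => //; exact: names_gL.
have [i Hi [s Hwin]] := HG (qL n p) (gL n p) (names_gL n p) I.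
exists (fun _ => nat_of_bool (G (qL n p) 0 == 2)); split.
  apply: (computes_of (need := fun _ => 2) HeK) => N k.
  rewrite /FK /arg /= psnd_pair prefix_code_avail.
  by case: ltnP => Hk //; rewrite prefix_code_elem.
exists (G (qL n p) 0 == 2) => //=.
rewrite (phi_Good n Hpx) /=; simpl in Hi; rewrite Hi.
case: i Hi Hwin => Hi Hwin /=.
- split => // G0.
  have [y [Hy1 Hy2]] := combine_play (dL n) s (sphi (wG n (PL p))).
  have := Hwin y Hy1; move/(char_gL p y Hn) => HW; exfalso.
  by apply: (phi_P2 (@turn_dL n) (s := sphi (wG n (PL p))) _ Hy2 _ G0 HW).
- split => // _; apply: NNPP => G0.
  have [y [Hy1 Hy2]] := combine_play (dL n) (sphi (wB n (PL p))) s.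
  have := Hwin y Hy2; rewrite /=; apply; apply/(char_gL p y Hn).
  by apply: (phi_P1 (@turn_dL n) (s := sphi (wB n (PL p))) _ Hy1 _ G0).
Qed.

Definition czk (k u : nat) :=
  loop (fun t r y _ => r + (avail t y && (elem t y == 0))) k 0 u 0.

Lemma rp_czk K U : rp K -> rp U -> rp (fun a => czk (K a) (U a)).
Proof.
move=> HK HU; apply: rp_loop => //; last exact: rp_const.
- apply: rp_add; first exact: rp_proj.
  apply: rpb_and; first exact: rpb_avail (rp_proj 0) (rp_proj 2).
  exact: rpb_eq (rp_elem (rp_proj 0) (rp_proj 2)) (rp_const 0).
- exact: rp_const.
Qed.

Lemma czk_ok k L : czk k (seqcode L) = count_mem false (map (fun a => a != 0) (take k L)).
Proof.
elim: k => [|t IH] /=; first by rewrite take0.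
rewrite /czk /= -/(czk t _) IH avail_code elem_code.
case: (ltnP t (size L)) => Ht.
- rewrite (take_nth 0 Ht) map_rcons -cats1 count_cat /=.
  by case: (nth 0 L t == 0) (nth 0 L t) => -[|?]; rewrite ?addn0 ?addn1 //=.
- by rewrite !take_oversize ?addn0 //; lia.
Qed.

Definition sizec (u : nat) := loop (fun t r y _ => r + avail t y) u 0 u 0.

Lemma rp_sizec U : rp U -> rp (fun a => sizec (U a)).
Proof.
move=> HU; apply: rp_loop => //; try exact: rp_const.
exact: rp_add (rp_proj 1) (rpb_avail (rp_proj 0) (rp_proj 2)).
Qed.

Lemma sizec_ok L : sizec (seqcode L) = size L.
Proof.
rewrite /sizec.
have H : forall t, loop (fun t r y _ => r + avail t y) t 0 (seqcode L) 0 = minn t (size L).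
  elim=> [|t IH] /=; first by rewrite min0n.
  rewrite IH avail_code; case: ltnP => H; lia.
rewrite H; have := size_code L; lia.
Qed.

Definition leadc (u : nat) :=
  loop (fun t r y _ => if (r == t) && (avail t y && (elem t y != 0)) then t.+1 else r) u 0 u 0.

Lemma rp_leadc U : rp U -> rp (fun a => leadc (U a)).
Proof.
move=> HU; apply: rp_loop => //; try exact: rp_const.
apply: rp_if; last exact: rp_proj.
- apply: rpb_and; first exact: rpb_eq (rp_proj 1) (rp_proj 0).
  apply: rpb_and; first exact: rpb_avail (rp_proj 0) (rp_proj 2).
  exact: rpb_neg (rpb_eq (rp_elem (rp_proj 0) (rp_proj 2)) (rp_const 0)).
- exact: rp_succ (rp_proj 0).
Qed.

Lemma leadc_ok L : leadc (seqcode L) = find (fun a => a == 0) L.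
Proof.
rewrite /leadc.
have H : forall t, loop (fun t r y _ => if (r == t) && (avail t y && (elem t y != 0)) then t.+1 else r)
   t 0 (seqcode L) 0 = find (fun a => a == 0) (take t L).
  elim=> [|t IH] /=; first by rewrite take0.
  rewrite IH avail_code elem_code.
  case: (ltnP t (size L)) => Ht.
  - rewrite (take_nth 0 Ht) -cats1 find_cat /=.
    have Hs : size (take t L) = t by rewrite size_take Ht.
    case: (boolP (has (fun a => a == 0) (take t L))) => Hh.
    + have := Hh; rewrite has_find Hs => Hf.
      by rewrite (ltn_eqF Hf).
    + rewrite (hasNfind Hh) Hs eqxx /=.
      by case: (nth 0 L t == 0) => /=; rewrite ?addn0 ?addn1.
  - rewrite !take_oversize //; [by rewrite andbF | lia].
by rewrite H take_oversize // size_code.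
Qed.

Definition wcUo (m j : nat) := loop (fun t r y z => ublk (elem ((z.-1 - t) + 2) y) r) m 0 j m.

Lemma rp_wcUo M J : rp M -> rp J -> rp (fun a => wcUo (M a) (J a)).
Proof.
move=> HM HJ; apply: rp_loop => //; last exact: rp_const.
apply: rp_ublk; last exact: rp_proj.
apply: rp_elem; last exact: rp_proj.
exact: rp_add (rp_sub (rp_pred (rp_proj 3)) (rp_proj 0)) (rp_const 2).
Qed.

Definition ksof (L : seq nat) m := mkseq (fun t => nth 0 L (t + 2)) m.

Lemma wcUo_ok m L : wcUo m (seqcode L) = wcode (unary (ksof L m)).
Proof.
rewrite /wcUo (@loop_foldr _ _ _ (fun t => nth 0 L (t + 2)) ublk); last by move=> t r; rewrite elem_code.
by rewrite /wcode -[unary _]cats0 code_unary.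
Qed.

Definition tupco (m j : nat) :=
  loop (fun t r y z => pair (elem ((z.-1 - t) + 2) y) r) m.-1 (elem (m.-1 + 2) j) j m.-1.

Lemma rp_tupco M J : rp M -> rp J -> rp (fun a => tupco (M a) (J a)).
Proof.
move=> HM HJ; apply: rp_loop => //.
- apply: rp_pair; last exact: rp_proj.
  apply: rp_elem; last exact: rp_proj.
  exact: rp_add (rp_sub (rp_pred (rp_proj 3)) (rp_proj 0)) (rp_const 2).
- exact: rp_pred.
- exact: rp_elem (rp_add (rp_pred HM) (rp_const 2)) HJ.
- exact: rp_pred.
Qed.

Lemma tupco_ok m L : 0 < m -> tupco m (seqcode L) = Defs.tuple (ksof L m).
Proof.
case: m => // m _.
rewrite /tupco /ksof mkseqS tuple_rcons /= elem_code.
rewrite (@loop_foldr _ _ _ (fun t => nth 0 L (t + 2)) pair) //.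
by move=> t r; rewrite elem_code.
Qed.

Definition hdr (i : nat) (c : bool) : seq bool := nseq i true ++ [:: false; c].

Definition hcode (i c cu : nat) := iter i bone (bzero (pair c cu).+1).

Lemma hcode_ok i c w : wcode (hdr i c ++ w) = hcode i c (wcode w).
Proof. by rewrite /hcode /hdr; elim: i => [|i IH] //=; rewrite -IH. Qed.

Lemma rp_hcode I Cc CU : rp I -> rp Cc -> rp CU -> rp (fun a => hcode (I a) (Cc a) (CU a)).
Proof.
move=> HI HC HU.
apply: rp_ext (@rp_loop (fun _ r _ _ => bone r) I (fun a => bzero (pair (Cc a) (CU a)).+1)
   (fun _ => 0) (fun _ => 0) _ HI _ _ _) _.
- exact: rp_succ (rp_pair (rp_const 1) (rp_proj 1)).
- exact: rp_succ (rp_pair (rp_const 0) (rp_succ (rp_pair HC HU))).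
- exact: rp_const. - exact: rp_const.
- by move=> a; rewrite /hcode; elim: (I a) => [|k IH] //=; rewrite IH.
Qed.

Lemma rp_double f : rp f -> rp (fun a => (f a).*2).
Proof. move=> H; apply: rp_ext (rp_add H H) _ => a; lia. Qed.

Definition dLL n (w : seq bool) : player :=
  let i := find (fun b => ~~ b) w in
  if i == size w then P1 else if size w == i.+1 then P2 else dL n (drop i.+2 w).

Definition pcLL n u :=
  let i := leadc u in let s := sizec u in
  if i == s then 1 else if s == i.+1 then 2 else pc n (czk u u - czk i.+2 u).

Lemma rp_pcLL n U : rp U -> rp (fun a => pcLL n (U a)).
Proof.
move=> HU; rewrite /pcLL.
have Hi := rp_leadc HU; have Hs := rp_sizec HU.
apply: rp_if; first exact: rpb_eq Hi Hs; first exact: rp_const.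
apply: rp_if; first exact: rpb_eq Hs (rp_succ Hi); first exact: rp_const.
exact: rp_pc (rp_sub (rp_czk HU HU) (rp_czk (rp_succ (rp_succ Hi)) HU)).
Qed.

Lemma pcLL_ok n w : pcLL n (wcode w) = player_code (dLL n w).
Proof.
rewrite /pcLL /dLL /wcode leadc_ok sizec_ok !czk_ok size_map find_map.
have -> : find (preim nat_of_bool (fun a => a == 0)) w = find (fun b => ~~ b) w.
  by apply: eq_find => -[].
rewrite take_oversize; last by rewrite -/(wcode w); have := size_code (map nat_of_bool w); rewrite size_map.
rewrite -map_take !map_nb_neq0.
case: eqP => // _; case: eqP => // _.
set i := find _ w.
have -> : count_mem false w - count_mem false (take i.+2 w) = count_mem false (drop i.+2 w).
  by rewrite -{1}(cat_take_drop i.+2 w) count_cat addKn.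
rewrite /pc /dL /=; case: (_ < n) => //; rewrite /own; by case: odd.
Qed.

Lemma find_hdr i c v : find (fun b => ~~ b) (hdr i c ++ v) = i.
Proof. rewrite /hdr -catA; elim: i => [|i IH] //=; by rewrite IH. Qed.

Lemma turn_dLL n i c : turn_ok n (dLL n) (hdr i c).
Proof.
move=> ks r Hn; rewrite /dLL find_hdr size_cat /hdr size_cat size_nseq /=.
have -> : (i == i + 2 + size (unary ks ++ nseq r true)) = false by apply/eqP; lia.
have -> : (i + 2 + size (unary ks ++ nseq r true) == i.+1) = false by apply/eqP; lia.
have -> : drop i.+2 ((nseq i true ++ [:: false; c]) ++ unary ks ++ nseq r true) = unary ks ++ nseq r true.
  rewrite -catA drop_cat size_nseq ifF; last lia.
  have -> : i.+2 - i = 2 by lia.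
  by rewrite /= drop0.
by have := @turn_dL n ks r Hn.
Qed.

Definition Pic (p : baire) (i : nat) (c : bool) (ks : seq nat) : bool :=
  p (pair i ((Defs.tuple ks).*2 + c)) == 1.

Definition qLL n (p : baire) (N : nat) : nat :=
  if odd N then
    let v := N %/ 2 in let b := pfst v in let L := decode (psnd v) in
    let i := nth 0 L 0 in let c := nth 0 L 1 != 0 in
    if b == 0 then
      (if Pic p i c (ksof L n) != odd n then (wcode (hdr i c ++ unary (ksof L n))).+1 else 0)
    else if b < n then (wcode (hdr i c ++ unary (ksof L (n - b)))).+1 else 0
  else pcLL n (N %/ 2).

Definition needLL n N :=
  if odd N && (pfst (N %/ 2) == 0) then
    (let L := decode (psnd (N %/ 2)) in
     pair (nth 0 L 0) ((Defs.tuple (ksof L n)).*2 + (nth 0 L 1 != 0))).+1 else 0.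

Definition FHL n (a : seq nat) : nat :=
  let x := arg 0 a in let N := pfst x in let cc := psnd x in
  if odd N then
    let v := N %/ 2 in let b := pfst v in let j := psnd v in
    let i := elem 0 j in let cb := nat_of_bool (elem 1 j != 0) in
    if b == 0 then
      (let idx := pair i ((tupco n j).*2 + cb) in
       if avail idx cc then (if (elem idx cc == 1) != odd n then (hcode i cb (wcUo n j)).+2 else 1) else 0)
    else if b < n then (hcode i cb (wcUo (n - b) j)).+2 else 1
  else (pcLL n (N %/ 2)).+1.

Lemma rp_FHL n : rp (FHL n).
Proof.
rewrite /FHL.
have HN := rp_pfst (rp_proj 0).
have Hc := rp_psnd (rp_proj 0).
have Hv := rp_half HN.
have Hb := rp_pfst Hv.
have Hj := rp_psnd Hv.
have Hi := rp_elem (rp_const 0) Hj.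
have Hcb : rp (fun a => nat_of_bool (elem 1 (psnd (pfst (arg 0 a) %/ 2)) != 0)).
  exact: rpb_neg (rpb_eq (rp_elem (rp_const 1) Hj) (rp_const 0)).
apply: rp_if; first exact: rpb_odd HN.
- apply: rp_if; first exact: rpb_eq Hb (rp_const 0).
  + have Hx := rp_pair Hi (rp_add (rp_double (rp_tupco (rp_const n) Hj)) Hcb).
    apply: rp_if; first exact: rpb_avail Hx Hc.
    * apply: rp_if; last exact: rp_const.
      - apply: rpb_neg; apply: rpb_beq.
        + exact: rpb_eq (rp_elem Hx Hc) (rp_const 1).
        + exact: rpb_odd (rp_const n).
      - exact: rp_succ (rp_succ (rp_hcode Hi Hcb (rp_wcUo (rp_const n) Hj))).
    * exact: rp_const.
  + apply: rp_if; first exact: rpb_lt Hb (rp_const n).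
    * exact: rp_succ (rp_succ (rp_hcode Hi Hcb (rp_wcUo (rp_sub (rp_const n) Hb) Hj))).
    * exact: rp_const.
- apply: rp_succ; apply: rp_pcLL; exact: Hv.
Qed.

Lemma FHL_spec n p N k : 0 < n ->
  FHL n [:: pair N (seqcode (Defs.prefix p k))] = if needLL n N <= k then (qLL n p N).+1 else 0.
Proof.
move=> Hn; rewrite /FHL /needLL /qLL.
have -> : arg 0 [:: pair N (seqcode (Defs.prefix p k))] = pair N (seqcode (Defs.prefix p k)) by [].
cbv zeta beta; rewrite pfst_pair psnd_pair.
case: (odd N); cbv iota; last by [].
set j := psnd (N %/ 2); have Ej := decode_ok j; set L := decode j in Ej *.
clearbody L; rewrite -Ej !(elem_code _ L).
case: eqP => Hb; cbv iota.
- rewrite tupco_ok // prefix_code_avail wcUo_ok -hcode_ok.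
  case: ltnP => Hk.
  + rewrite prefix_code_elem // /Pic.
    by case: (_ != _).
  + by [].
- by rewrite wcUo_ok -hcode_ok; case: (_ < n).
Qed.

Lemma reach_nil h x ks : reach h x ks -> reach h x [::].
Proof. by move=> H; have := @reach_take h x ks 0 H; rewrite take0. Qed.

Lemma reach_hdr i c x : reach (hdr i c) x [::] <->
  (forall j, j < i -> x j = true) /\ x i = false /\ x i.+1 = c.
Proof.
rewrite /reach /= cats0 /hdr size_cat size_nseq /=.
split.
- move=> H; split; [|split].
  + move=> j Hj; rewrite H; last lia.
    by rewrite nth_cat size_nseq Hj nth_nseq Hj.
  + by rewrite H ?nth_cat ?size_nseq ?ltnn ?subnn //; lia.
  + rewrite H ?nth_cat ?size_nseq; last lia.
    by rewrite ltnNge leqnSn /= subSnn.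
- move=> [H1 [H2 H3]] j Hj; rewrite nth_cat size_nseq.
  case: (ltnP j i) => L; first by rewrite nth_nseq L H1.
  have : (j == i) || (j == i.+1) by lia.
  by case/orP => /eqP ->; rewrite ?subnn ?subSnn.
Qed.

Lemma hdr_uniq i c i' c' x : reach (hdr i c) x [::] -> reach (hdr i' c') x [::] ->
  i = i' /\ c = c'.
Proof.
move=> /reach_hdr [A1 [A2 A3]] /reach_hdr [B1 [B2 B3]].
have E : i = i'.
  case: (ltngtP i i') => // L.
  - by have := B1 i L; rewrite A2.
  - by have := A1 i' L; rewrite B2.
by subst i'; split => //; rewrite -A3 -B3.
Qed.

Lemma hdr_or (x : nat -> bool) : (forall j, x j = true) \/ exists i c, reach (hdr i c) x [::].
Proof.
case: (classic (exists j, ~~ x j)) => [H|H].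
- right; have Hm := ex_minnP H; case: Hm => i Hi Hmin.
  exists i, (x i.+1); apply/reach_hdr; split; last by split => //; apply/negbTE.
  move=> j Hj; apply: negbNE; apply/negP => Hx; have := Hmin j Hx; lia.
- left => j; apply: negbNE; apply/negP => Hx; apply: H; by exists j.
Qed.

Lemma allones_pref (x : nat -> bool) i c u : (forall j, x j = true) ->
  bprefix x (size (hdr i c ++ u)) <> hdr i c ++ u.
Proof.
move=> H /bprefix_eq E.
have Hi : i < size (hdr i c ++ u) by rewrite /hdr !size_cat size_nseq /=; lia.
by have := E i Hi; rewrite H /hdr -catA nth_cat size_nseq ltnn subnn.
Qed.

Lemma qLL_odd n p b j : qLL n p (pair b j).*2.+1 =
  let L := decode j in let i := nth 0 L 0 in let c := nth 0 L 1 != 0 in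
    if b == 0 then
      (if Pic p i c (ksof L n) != odd n then (wcode (hdr i c ++ unary (ksof L n))).+1 else 0)
    else if b < n then (wcode (hdr i c ++ unary (ksof L (n - b)))).+1 else 0.
Proof.
rewrite /qLL; have -> : odd (pair b j).*2.+1 = true by rewrite /= odd_double.
by rewrite hdbl1 pfst_pair psnd_pair.
Qed.

Lemma ksof_cons a b ks : ksof (a :: b :: ks) (size ks) = ks.
Proof.
rewrite /ksof -[RHS](mkseq_nth 0); apply: eq_mkseq => t; by rewrite addn2.
Qed.

Lemma ex_ks2 m (Q : nat -> bool -> seq nat -> Prop) :
  (exists j, Q (nth 0 (decode j) 0) (nth 0 (decode j) 1 != 0) (ksof (decode j) m)) <->
  exists i c ks, size ks = m /\ Q i c ks.
Proof.
split.
- move=> [j Hj]; do 3 eexists; split; last exact: Hj.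
  by rewrite size_mkseq.
- move=> [i [c [ks [Hs Hq]]]]; exists (seqcode [:: i, nat_of_bool c & ks]).
  rewrite decode_code /= -Hs ksof_cons; by case: c Hq.
Qed.

Definition gLL n (p : baire) : game :=
  (dLL n, diff_set n (fun b => open_of (fun j => qLL n p (pair b j).*2.+1))).

Lemma names_gLL n p : @names (gameR n) (qLL n p) (gLL n p).
Proof.
split => // w; rewrite /qLL odd_double; cbv iota; rewrite hdbl; exact: pcLL_ok.
Qed.

Lemma char_gLL n p x i c : 0 < n -> reach (hdr i c) x [::] ->
  ((gLL n p).2 x <-> Wh n (hdr i c) (Pic p i c) x).
Proof.
move=> Hn H0; apply: char_diff => //.
- move=> b Hb.
  rewrite (@open_of_gen _ (fun _ => true)
    (fun j => hdr (nth 0 (decode j) 0) (nth 0 (decode j) 1 != 0) ++ unary (ksof (decode j) (n - b)))).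
  + rewrite (ex_ks2 (n - b) (fun i' c' ks => true /\
        bprefix x (size (hdr i' c' ++ unary ks)) = hdr i' c' ++ unary ks)).
    split.
    * move=> [i' [c' [ks [Hs [_ Hp]]]]].
      have Hr : reach (hdr i' c') x ks by move: Hp => /bprefix_eq.
      have [E1 E2] := hdr_uniq H0 (reach_nil Hr); subst i' c'.
      by exists ks.
    * move=> [ks [Hs Hr]]; exists i, c, ks; split => //; split => //.
      exact/bprefix_eq.
  + move=> j; rewrite qLL_odd.
    by case: b Hb => //= b Hb; rewrite Hb.
- rewrite (@open_of_gen _ (fun j => Pic p (nth 0 (decode j) 0) (nth 0 (decode j) 1 != 0)
      (ksof (decode j) n) != odd n)
    (fun j => hdr (nth 0 (decode j) 0) (nth 0 (decode j) 1 != 0) ++ unary (ksof (decode j) n))).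
  + rewrite (ex_ks2 n (fun i' c' ks => Pic p i' c' ks != odd n /\
        bprefix x (size (hdr i' c' ++ unary ks)) = hdr i' c' ++ unary ks)).
    split.
    * move=> [i' [c' [ks [Hs [HP Hp]]]]].
      have Hr : reach (hdr i' c') x ks by move: Hp => /bprefix_eq.
      have [E1 E2] := hdr_uniq H0 (reach_nil Hr); subst i' c'.
      by exists ks.
    * move=> [ks [Hs [Hr HP]]]; exists i, c, ks; split => //; split => //.
      exact/bprefix_eq.
  + move=> j; by rewrite qLL_odd.
Qed.

Lemma nowin_allones n p x : (forall j, x j = true) -> ~ (gLL n p).2 x.
Proof.
move=> H.
have Hm : is_min_idx n (fun b => open_of (fun j => qLL n p (pair b j).*2.+1)) x n.
  split => //; split; first by rewrite ltnn.
  move=> b _ [j [w [Ej Hw]]].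
  move: Ej; rewrite qLL_odd /=.
  set L := decode j.
  have K : forall u, (wcode (hdr (nth 0 L 0) (nth 0 L 1 != 0) ++ u)).+1 = (wcode w).+1 -> False.
    move=> u [/wcode_inj E]; subst w; exact: allones_pref Hw.
  case: (b == 0); first by case: (_ != _) => //; apply: K.
  by case: (b < n) => //; apply: K.
by rewrite /= (diffP Hm).
Qed.

Definition h0 (i : nat) := iter i bone (bzero 0).

Lemma h0_ok i : wcode (nseq i true ++ [:: false]) = h0 i.
Proof. by rewrite /h0; elim: i => [|i IH] //=; rewrite -IH. Qed.

Lemma rp_h0 I : rp I -> rp (fun a => h0 (I a)).
Proof.
move=> HI.
apply: rp_ext (@rp_loop (fun _ r _ _ => bone r) I (fun a => bzero 0)
   (fun _ => 0) (fun _ => 0) _ HI _ _ _) _.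
- exact: rp_succ (rp_pair (rp_const 1) (rp_proj 1)).
- exact: rp_const.
- exact: rp_const. - exact: rp_const.
- by move=> a; rewrite /h0; elim: (I a) => [|k IH] //=; rewrite IH.
Qed.

Definition FKL (a : seq nat) : nat :=
  let x := arg 0 a in let cc := psnd x in
  let idx := (h0 (pfst (pfst x))).*2.+1 in
  if avail idx cc then (elem idx cc).+1 else 0.

Lemma rp_FKL : rp FKL.
Proof.
rewrite /FKL.
have Hc := rp_psnd (rp_proj 0).
have Hx : rp (fun a => (h0 (pfst (pfst (arg 0 a)))).*2.+1).
  apply: rp_succ; apply: rp_double; apply: rp_h0; apply: rp_pfst; exact: rp_pfst (rp_proj 0).
apply: rp_if; first exact: rpb_avail Hx Hc.
- exact: rp_succ (rp_elem Hx Hc).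
- exact: rp_const.
Qed.

Lemma dLL_ones n j : dLL n (nseq j true) = P1.
Proof.
rewrite /dLL hasNfind ?size_nseq ?eqxx //.
by elim: j.
Qed.

Lemma dLL_hdr0 n i : dLL n (nseq i true ++ [:: false]) = P2.
Proof.
have Hf : find (fun b => ~~ b) (nseq i true ++ [:: false]) = i.
  by elim: i => [|i IH] //=; rewrite IH.
rewrite /dLL Hf size_cat size_nseq /= addn1.
by rewrite (_ : (i == i.+1) = false) ?eqxx //; apply/eqP; lia.
Qed.

Lemma hdr_split i c v :
  find (fun b => ~~ b) (hdr i c ++ v) = i /\ (size (hdr i c ++ v) == i.+1) = false /\
  drop i.+2 (hdr i c ++ v) = v.
Proof.
split; first exact: find_hdr.
split.
- apply/eqP; rewrite /hdr !size_cat size_nseq /=; lia.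
- rewrite /hdr -catA drop_cat size_nseq ifF; last lia.
  have -> : i.+2 - i = 2 by lia.
  by rewrite /= drop0.
Qed.

Lemma Good_Pic n (p : baire) (xs : nat -> (nat -> bool) * (nat -> bool)) i c :
  (forall m, p (pair i m.*2) = nat_of_bool ((xs i).1 m)) ->
  (forall m, p (pair i m.*2.+1) = nat_of_bool ((xs i).2 m)) ->
  (phi n (if c then (xs i).2 else (xs i).1) <-> Good n (Pic p i c) [::]).
Proof.
move=> H1 H2; rewrite /Good /phi /= subn0; apply: qalt_ext => l.
rewrite /Pic; case: c => /=.
- by rewrite addn1 H2; case: ((xs i).2 _).
- by rewrite addn0 H1; case: ((xs i).1 _).
Qed.

Lemma llpo_part n : 0 < n -> Wred (hat (SigmaLLPO n)) (Det n).
Proof.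
move=> Hn.
have [eH HeH] := rp_FHL n.
have [eK HeK] := rp_FKL.
exists eK, eH => G HG p xs Hp Hdom.
have Hp1 : forall i m, p (pair i m.*2) = nat_of_bool ((xs i).1 m).
  by move=> i m; have [A _] := Hp i; exact: A m.
have Hp2 : forall i m, p (pair i m.*2.+1) = nat_of_bool ((xs i).2 m).
  by move=> i m; have [_ B] := Hp i; exact: B m.
have HGood : forall i c, phi n (if c then (xs i).2 else (xs i).1) <-> Good n (Pic p i c) [::].
  by move=> i c; apply: Good_Pic.
exists (qLL n p); split.
  by apply: (computes_of (need := needLL n) HeH) => N k; rewrite FHL_spec.
split; first by exists (gLL n p) => //; exact: names_gLL.
have [s Hs Hwin] := HG (qLL n p) (gLL n p) (names_gLL n p) I.
pose cc i := if excluded_middle_informative (Good n (Pic p i true) [::]) then true else false.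
have Gcc : forall i, Good n (Pic p i (cc i)) [::].
  move=> i; rewrite /cc; case: excluded_middle_informative => // H.
  apply/(HGood i false); case: (Hdom i) => // /(HGood i true) //.
have NW1 : ~ winning (gLL n p) s P1.
  move=> W1.
  pose t w := let i := find (fun b => ~~ b) w in
    if size w == i.+1 then cc i else sphi (wG n (Pic p i (cc i))) (drop i.+2 w).
  have [y [Hy1 Hy2]] := combine_play (dLL n) s t.
  have Wy := W1 y Hy1.
  case: (hdr_or y) => [Ha | [i [c Hr]]]; first exact: nowin_allones Ha Wy.
  have Ec : c = cc i.
    have [A1 [A2 A3]] := (reach_hdr i c y).1 Hr.
    have Hpre : bprefix y i.+1 = nseq i true ++ [:: false].
      have E : size (nseq i true ++ [:: false]) = i.+1 by rewrite size_cat size_nseq addn1.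
      rewrite -{1}E; apply/bprefix_eq => j.
      rewrite E ltnS leq_eqVlt => /orP [/eqP ->|L].
      + by rewrite nth_cat size_nseq ltnn subnn A2.
      + by rewrite nth_cat size_nseq L nth_nseq L A1.
    have := Hy2 i.+1; rewrite Hpre dLL_hdr0 => /(_ erefl).
    rewrite A3 /t size_cat size_nseq addn1.
    have -> : find (fun b => ~~ b) (nseq i true ++ [:: false]) = i.
      by elim: (i) => [|i' IH] //=; rewrite IH.
    by rewrite eqxx.
  subst c.
  move/(@char_gLL n p y _ _ Hn Hr): Wy.
  apply: (phi_P2 (@turn_dLL n i (cc i)) (s := t)) => //.
  move=> v; rewrite /t; have [E1 [E2 E3]] := hdr_split i (cc i) v.
  by rewrite E1 E2 E3.
have W2 : winning (gLL n p) s P2 by case: Hwin.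
have Hc : forall i, Good n (Pic p i (s (nseq i true ++ [:: false]))) [::].
  move=> i; apply: NNPP => G0.
  set c := s (nseq i true ++ [:: false]).
  pose u w := let j := find (fun b => ~~ b) w in
    if j == size w then size w < i else sphi (wB n (Pic p i c)) (drop j.+2 w).
  have [y [Hy1 Hy2]] := combine_play (dLL n) u s.
  have Pre : forall j, j <= i -> bprefix y j = nseq j true.
    elim=> [|j IH] Hj //.
    rewrite /bprefix mkseqS -/(bprefix y j) IH ?(ltnW Hj) //.
    have := Hy1 j; rewrite IH ?(ltnW Hj) // dLL_ones => /(_ erefl) ->.
    rewrite /u hasNfind ?size_nseq ?eqxx ?Hj; last by elim: (j).
    by rewrite -cats1; elim: (j) => [|j' IHj] //=; rewrite IHj.
  have Yi : y i = false.
    have := Hy1 i; rewrite Pre // dLL_ones => /(_ erefl) ->.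
    by rewrite /u hasNfind ?size_nseq ?eqxx ?ltnn //; elim: (i).
  have Hr : reach (hdr i c) y [::].
    apply/reach_hdr; split; [|split] => //.
    + move=> j Hj; have := Hy1 j; rewrite Pre ?(ltnW Hj) // dLL_ones => /(_ erefl) ->.
      by rewrite /u hasNfind ?size_nseq ?eqxx ?Hj //; elim: (j).
    + have Hpre : bprefix y i.+1 = nseq i true ++ [:: false].
        by rewrite /bprefix mkseqS -/(bprefix y i) Pre // Yi cats1.
      by have := Hy2 i.+1; rewrite Hpre dLL_hdr0 => /(_ erefl).
  apply: (W2 y Hy2).
  apply/(@char_gLL n p y _ _ Hn Hr).
  apply: (phi_P1 (@turn_dLL n i c) (s := u)) => //.
  move=> v; rewrite /u; have [E1 [E2 E3]] := hdr_split i c v.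
  rewrite E1 E3 ifF //; apply/eqP; rewrite /hdr !size_cat size_nseq /=; lia.
exists (fun N => G (qLL n p) (h0 (pfst N))); split.
  apply: (computes_of (need := fun N => (h0 (pfst N)).*2.+2) HeK) => N k.
  rewrite /FKL.
  have -> : arg 0 [:: pair N (seqcode (Defs.prefix (pairB p (G (qLL n p))) k))] =
     pair N (seqcode (Defs.prefix (pairB p (G (qLL n p))) k)) by [].
  cbv zeta beta; rewrite pfst_pair psnd_pair prefix_code_avail.
  case: ltnP => Hk //; rewrite prefix_code_elem // /pairB.
  have -> : odd (h0 (pfst N)).*2.+1 = true by rewrite /= odd_double.
  by have -> : (h0 (pfst N)).*2.+1./2 = h0 (pfst N) by lia.
exists (fun i => s (nseq i true ++ [:: false])).
- move=> i /=; rewrite pfst_pair -h0_ok; exact: Hs.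
- move=> i /=; apply/HGood; exact: Hc.
Qed.


Unset Implicit Arguments.

Theorem lemma14 (n : nat) (hn : 1 <= n) :
  Wred (hat (SigmaLLPO n)) (Det n) /\ Wred (SigmaLEM n) (Win n).
Proof. split; [exact: llpo_part | exact: lem_part]. Qed.
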